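(* Let $\Omega\subset\mathbb{R}^n$ be a bounded simply connected open set with smooth boundary, $\sigma_0\in C^2(\overline{\Omega})$ with $\sigma_0>0$ on $\overline{\Omega}$, $f\in C^{2,\alpha}(\partial\Omega)$, and let $u_0$ solve $\nabla\cdot\sigma_0\nabla u_0=0$ in $\Omega$, $u_0|_{\partial\Omega}=f$, with $\nabla u_0\neq0$ on $\overline{\Omega}$. Fix $p>0$. For $h\in C^2(\overline{\Omega})$ set $\rho=h/\sigma_0$ and $$d F_{\sigma_0}(h)=h|\nabla u_0|^p+p|\nabla u_0|^{p-2}\sigma_0\nabla u_0\cdot\nabla v_0,$$ where $v_0$ solves $\nabla\cdot\sigma_0\nabla v_0=-\nabla\cdot(h\nabla u_0)$ in $\Omega$, $v_0|_{\partial\Omega}=0$. Then $$\sigma_0\,T_0\!\left(\frac{dF_{\sigma_0}(h)}{\sigma_0|\nabla u_0|^p}\right)=-L\,\Delta_{\sigma_0,D}^{-1}\big(\sigma_0T_0\rho\big),$$ where $T_0=\nabla u_0\cdot\nabla$, $\Delta_{\sigma_0,D}$ is the Dirichlet realization of $\Delta_{\sigma_0}=\nabla\cdot\sigma_0\nabla$ in $\Omega$, and $L$ is the differential operator $$Lv=-\nabla\cdot\sigma_0\nabla v+p\,\nabla\cdot\left(\sigma_0\frac{\nabla u_0\cdot\nabla v}{|\nabla u_0|^2}\nabla u_0\right).$$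
   Context: $dF_{\sigma_0}$ is the differential at $\sigma_0$ of $F(\sigma)=\sigma|\nabla u_\sigma|^p$, with $u_\sigma$ the $\sigma$-harmonic function with boundary data $f$; $h$ plays the role of $\sigma-\sigma_0$ and $\rho=(\sigma-\sigma_0)/\sigma_0$. *)

(* Defs.v *)
From HB Require Import structures.
From mathcomp Require Import all_boot all_order all_algebra.
From mathcomp Require Import all_classical all_reals all_analysis.
Set Implicit Arguments. Unset Strict Implicit. Unset Printing Implicit Defensive.
Import Order.TTheory GRing.Theory Num.Theory.
Import numFieldNormedType.Exports.
Local Open Scope classical_set_scope.
Local Open Scope ring_scope.

Section Defs.
Variables (R : realType) (n : nat).
Local Notation V := 'rV[R]_n.

Definition ebasis (i : 'I_n) : V := delta_mx 0 i.

Definition partial (i : 'I_n) (f : V -> R) (x : V) : R := 'D_(ebasis i) f x.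

Definition grad (f : V -> R) (x : V) : V := \row_i partial i f x.
Definition dotv (u v : V) : R := \sum_i u 0 i * v 0 i.
Definition enorm (u : V) : R := Num.sqrt (dotv u u).

Definition divg (F : V -> V) (x : V) : R :=
  \sum_i partial i (fun y => F y 0 i) x.

Definition bdry (A : set V) : set V := closure A `\` interior A.

Definition C1_on (A : set V) (f : V -> R) : Prop :=
  forall x, A x -> differentiable f x /\ forall i, {for x, continuous (partial i f)}.
Definition C2_on (A : set V) (f : V -> R) : Prop :=
  C1_on A f /\ forall i, C1_on A (partial i f).

Definition cont_ext (A : set V) (g : V -> R) : Prop :=
  exists G : V -> R, {within closure A, continuous G} /\ forall x, A x -> G x = g x.

Definition C2_closure (A : set V) (f : V -> R) : Prop :=
  [/\ C2_on A f, {within closure A, continuous f},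
      forall i, cont_ext A (partial i f) &
      forall i j, cont_ext A (partial j (partial i f))].


Definition iter_partial (s : seq 'I_n) (f : V -> R) : V -> R :=
  foldr (fun i g => partial i g) f s.
Definition smooth_on (A : set V) (f : V -> R) : Prop :=
  forall s x, A x -> differentiable (iter_partial s f) x.

Definition smooth_boundary (A : set V) : Prop :=
  forall x0, bdry A x0 -> exists2 r : R, 0 < r &
    exists phi : V -> R, [/\ smooth_on (ball x0 r) phi,
      (forall y, ball x0 r y -> grad phi y != 0) &
      (forall y, ball x0 r y -> (A y <-> phi y < 0))].

(* simple connectivity: nonempty, path connected, every loop freely
   homotopic (within A) to a constant loop *)
Definition unit_itv : set R := [set t | 0 <= t <= 1].
Definition unit_sq : set (R * R) := [set st | 0 <= st.1 <= 1 /\ 0 <= st.2 <= 1].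
Definition simply_connected (A : set V) : Prop :=
  [/\ A !=set0,
    (forall x y, A x -> A y -> exists g : R -> V,
       [/\ {within unit_itv, continuous g}, g 0 = x, g 1 = y &
           forall t, unit_itv t -> A (g t)]) &
    (forall g : R -> V, {within unit_itv, continuous g} -> g 0 = g 1 ->
       (forall t, unit_itv t -> A (g t)) ->
       exists H : R -> R -> V,
       [/\ {within unit_sq, continuous (fun st => H st.1 st.2)},
           (forall s, unit_itv s -> H s 0 = g s),
           (forall s, unit_itv s -> H s 1 = H 0 1),
           (forall t, unit_itv t -> H 0 t = H 1 t) &
           (forall s t, unit_itv s -> unit_itv t -> A (H s t))])].

(* f belongs to C^{2,alpha}(boundary of A): f is the trace on the boundary of
   a C^2 function on R^n whose second derivatives are alpha-Hoelder on
   closure A (equivalent to the intrinsic definition for smooth bounded A) *)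
Definition C2alpha_bdry (A : set V) (alpha : R) (f : V -> R) : Prop :=
  exists F : V -> R, [/\ C2_on setT F,
    (forall x, bdry A x -> F x = f x) &
    forall i j, exists K : R, forall x y, closure A x -> closure A y ->
      `|partial j (partial i F) x - partial j (partial i F) y| <= K * (`|x - y| `^ alpha)].

Definition sigma_lap (sigma v : V -> R) (x : V) : R :=
  divg (fun y => sigma y *: grad v y) x.

Definition T0 (u0 w : V -> R) (x : V) : R := dotv (grad u0 x) (grad w x).

Definition dF (p : R) (sigma0 u0 h v0 : V -> R) (x : V) : R :=
  h x * (enorm (grad u0 x) `^ p)
  + p * (enorm (grad u0 x) `^ (p - 2)) * sigma0 x * dotv (grad u0 x) (grad v0 x).

Definition Lop (p : R) (sigma0 u0 v : V -> R) (x : V) : R :=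
  - sigma_lap sigma0 v x
  + p * divg (fun y => (sigma0 y * dotv (grad u0 y) (grad v y)
                         / dotv (grad u0 y) (grad u0 y)) *: grad u0 y) x.

End Defs.

(* Main.v *)
Require Import Defs.
From HB Require Import structures.
From mathcomp Require Import all_boot all_order all_algebra.
From mathcomp Require Import all_classical all_reals all_analysis.
From mathcomp Require Import ring lra.
Import Order.TTheory GRing.Theory Num.Theory.
Import numFieldNormedType.Exports.
Local Open Scope classical_set_scope.
Local Open Scope ring_scope.

Section S.
Variables (R : realType) (n : nat).
Local Notation V := 'rV[R]_n.
Lemma dir_fun (f : V -> R) (x e : V) (s : R) :
  (fun h : R => h^-1 *: (((fun t : R => f (t *: e + x)) \o shift s) (h *: 1) - f (s *: e + x)))
  = (fun h : R => h^-1 *: ((f \o shift (s *: e + x)) (h *: e) - f (s *: e + x))).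
Proof.
apply: funext => h /=; congr (_ *: (_ - _)); congr f.
by rewrite /shift /= scaler1 scalerDl addrA. 
Qed.
Lemma dir_D (f : V -> R) (x e : V) (s : R) :
  'D_1 (fun t : R => f (t *: e + x)) s = 'D_e f (s *: e + x).
Proof. by rewrite /derive /= dir_fun. Qed.
Lemma dir_derivable (f : V -> R) (x e : V) (s : R) :
  derivable (fun t : R => f (t *: e + x)) s 1 = derivable f (s *: e + x) e.
Proof. by rewrite /derivable /= dir_fun. Qed.
Lemma open_line (Omega : set V) x e : open Omega -> Omega x ->
  exists2 r : R, 0 < r & forall t : R, `|t| < r -> Omega (t *: e + x).
Proof.
move=> oO Ox.
have /nbhs_ballP [r r0 sub] : nbhs x Omega by apply: open_nbhs_nbhs.
have e1 : 0 < `|e| + 1 by rewrite ltr_wpDl.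
exists (r / (`|e| + 1)); first by rewrite divr_gt0.
move=> t tr; apply: sub; rewrite -ball_normE /ball_ /=.
rewrite opprD addrCA subrr addr0 normrN normrZ.
rewrite ltr_pdivlMr // in tr.
apply: le_lt_trans tr; rewrite ler_wpM2l //; by rewrite lerDl.
Qed.

Lemma max_D0 (Omega : set V) (f : V -> R) x e : open Omega -> Omega x ->
  (forall y, Omega y -> f y <= f x) -> (forall y, Omega y -> derivable f y e) ->
  'D_e f x = 0.
Proof.
move=> oO Ox mx df.
have [r r0 Hr] := open_line _ _ e oO Ox.
have dg : forall t, t \in `](- r), r[ -> derivable (fun t : R => f (t *: e + x)) t 1.
  move=> t; rewrite in_itv /= => tr; rewrite dir_derivable; apply: df; apply: Hr.
  by rewrite ltr_norml.
have c0 : (0:R) \in `](- r), r[ by rewrite in_itv /= oppr_lt0 r0.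
have := derive1_at_max (ltW (gtrN r0)) dg c0.
rewrite scale0r add0r => /(_ _) H.
have Hr' : forall t, t \in `](- r), r[ -> Omega (t *: e + x).
  by move=> t; rewrite in_itv /= => tr; apply: Hr; rewrite ltr_norml.
have {}H := H (fun t tr => mx _ (Hr' t tr)).
transitivity ('D_e f (0 *: e + x)); first by rewrite scale0r add0r.
by rewrite -dir_D derive_val.
Qed.
Lemma half_facts (m : R) : 0 < m -> 0 < m / 2 /\ m / 2 < m.
Proof. move=> m0; split; lra. Qed.

Lemma max_D2 (Omega : set V) (f sig : V -> R) x e : open Omega -> Omega x ->
  (forall y, Omega y -> f y <= f x) -> (forall y, Omega y -> derivable f y e) ->
  (forall y, Omega y -> 0 < sig y) ->
  derivable (fun y => sig y * 'D_e f y) x e ->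
  'D_e (fun y => sig y * 'D_e f y) x <= 0.
Proof.
move=> oO Ox mx df sp dQ.
rewrite leNgt; apply/negP => d0.
have [r r0 Hr] := open_line _ _ e oO Ox.
set Q := (fun y => sig y * 'D_e f y) in dQ d0 *.
pose q := fun t : R => Q (t *: e + x).
have ex : 0 *: e + x = x by rewrite scale0r add0r.
have dq : derivable q 0 1 by rewrite /q dir_derivable ex.
have Dq : 'D_1 q 0 = 'D_e Q x by rewrite /q dir_D ex.
have q0 : q 0 = 0 by rewrite /q ex /Q (max_D0 _ _ _ _ oO Ox mx df) mulr0.
have Hn := cvgr_gt _ dq 0.
rewrite -/('D_1 q 0) Dq in Hn.
have H1 : \forall t \near 0^', 0 < t^-1 *: ((q \o shift 0) t%:A - q 0).
  by apply: Hn.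
have /nbhs_ballP [r' r'0 Hr'] := H1.
have /andP[mr mr'] : (Num.min r r' <= r) && (Num.min r r' <= r') by rewrite -le_min.
have m0 : 0 < Num.min r r' by rewrite lt_min r0 r'0.
set m := Num.min r r' in mr mr' m0 *.
pose t0 := m / 2.
have [t00 t0m] := half_facts _ m0.
have t0r : t0 < r by apply: lt_le_trans t0m mr.
have t0r' : t0 < r' by apply: lt_le_trans t0m mr'.
have pos : forall t, 0 < t <= t0 -> 0 < 'D_e f (t *: e + x).
  move=> t /andP [t0' tt0].
  have Ht : Omega (t *: e + x) by apply: Hr; rewrite (gtr0_norm t0'); exact: le_lt_trans tt0 t0r.
  have := Hr' t _ _.
  rewrite /ball /= sub0r normrN (gtr0_norm t0') q0 subr0 => /(_ _ (lt0r_neq0 t0')).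
  move=> /(_ (le_lt_trans tt0 t0r')).
  have -> : t%:A + 0 = t by rewrite addr0 /GRing.scale /= mulr1.
  move=> H; have : 0 < t^-1 * q t := H.
  have ti : 0 < t^-1 by rewrite invr_gt0.
  rewrite (pmulr_rgt0 _ ti) /q /Q.
  have sp' := sp _ Ht.
  by rewrite (pmulr_rgt0 _ sp').
pose g := fun t : R => f (t *: e + x).
have dg : forall t, 0 <= t <= t0 -> derivable g t 1.
  move=> t /andP[a b]; rewrite /g dir_derivable; apply: df; apply: Hr.
  by rewrite (ger0_norm a); apply: le_lt_trans b t0r.
have dg1 : forall t, t \in `]0, t0[ -> is_derive t 1 g ('D_e f (t *: e + x)).
  move=> t; rewrite in_itv /= => /andP[a b]; apply: DeriveDef.
    by apply: dg; rewrite !ltW.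
  by rewrite /g dir_D.
have cg : {within `[0, t0], continuous g}.
  apply: continuous_in_subspaceT => t; rewrite inE /= in_itv /= => tI.
  by apply: differentiable_continuous; apply/derivable1_diffP; apply: dg.
have [c cI Hc] := MVT t00 dg1 cg.
move: cI; rewrite in_itv /= => /andP[c0 ct0].
have gpos : 0 < 'D_e f (c *: e + x) by apply: pos; rewrite c0 ltW.
have : 0 < g t0 - g 0 by rewrite Hc subr0; exact: mulr_gt0.
rewrite /g ex subr_gt0 ltNge.
have Ht0 : Omega (t0 *: e + x) by apply: Hr; rewrite gtr0_norm.
by rewrite (mx _ Ht0).
Qed.
Lemma closure_bounded (A : set V) : bounded_set A -> bounded_set (closure A).
Proof.
rewrite /= /bounded_near => HA.
near=> M.
have M0 : 0 < M by near: M; apply: nbhs_pinfty_gt.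
have AM : A `<=` [set x | `|x| <= M] by near: M.
have sub : A `<=` closed_ball (0 : V) M.
  by move=> x /AM /= xM; rewrite closed_ballE // /closed_ball_ /= distrC subr0.
move=> x /(closureS sub); rewrite -(closure_id _).1; last exact: closed_ball_closed.
by rewrite closed_ballE // /closed_ball_ /= distrC subr0.
Unshelve. all: by end_near.
Qed.

Lemma D_lin3 (u1 u2 u3 : V -> R) (a b c : R) y v :
  derivable u1 y v -> derivable u2 y v -> derivable u3 y v ->
  'D_v (fun z => a * u1 z + b * u2 z + c * u3 z) y
  = a * 'D_v u1 y + b * 'D_v u2 y + c * 'D_v u3 y.
Proof.
move=> d1 d2 d3.
have -> : (fun z => a * u1 z + b * u2 z + c * u3 z) = a \*: u1 + b \*: u2 + c \*: u3.
  by apply: funext.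
have d12 : derivable (a \*: u1 + b \*: u2) y v.
  by apply: derivableD; apply: derivableZ.
rewrite (deriveD d12 (derivableZ d3)) (deriveD (derivableZ d1) (derivableZ d2)).
by rewrite (deriveZ _ d1) (deriveZ _ d2) (deriveZ _ d3).
Qed.

Lemma derivable_lin3 (u1 u2 u3 : V -> R) (a b c : R) y v :
  derivable u1 y v -> derivable u2 y v -> derivable u3 y v ->
  derivable (fun z => a * u1 z + b * u2 z + c * u3 z) y v.
Proof.
move=> d1 d2 d3.
have -> : (fun z => a * u1 z + b * u2 z + c * u3 z) = a \*: u1 + b \*: u2 + c \*: u3.
  by apply: funext.
by apply: derivableD; [apply: derivableD|]; apply: derivableZ.
Qed.

Lemma divg_sig (sig F : V -> R) x :
  sigma_lap sig F x = \sum_i partial i (fun y => sig y * partial i F y) x.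
Proof.
rewrite /sigma_lap /divg; apply: eq_bigr => i _; congr (partial i _ x).
by apply: funext => y; rewrite !mxE.
Qed.
End S.

Section S2.
Variables (R : realType) (n : nat).
Local Notation V := 'rV[R]_n.

Definition D2 (A : set V) (f : V -> R) := forall y, A y -> forall v,
  derivable f y v /\ (forall i, derivable (partial i f) y v).

Lemma sl_lin (A : set V) (sig f g k : V -> R) (a b c : R) x :
  open A -> A x -> (forall v, derivable sig x v) ->
  D2 A f -> D2 A g -> D2 A k ->
  sigma_lap sig (fun y => a * f y + b * g y + c * k y) x
  = a * sigma_lap sig f x + b * sigma_lap sig g x + c * sigma_lap sig k x.
Proof.
move=> oA Ax ds Df Dg Dk.
rewrite !divg_sig !mulr_sumr -!big_split /=; apply: eq_bigr => i _.
rewrite /partial.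
have nA : nbhs x A by apply: open_nbhs_nbhs.
have Hnear : \forall y \near x,
    sig y * 'D_(@ebasis R n i) (fun z => a * f z + b * g z + c * k z) y
    = a * (sig y * 'D_(@ebasis R n i) f y) + b * (sig y * 'D_(@ebasis R n i) g y)
      + c * (sig y * 'D_(@ebasis R n i) k y).
  near=> y.
  have Ay : A y by near: y.
  rewrite D_lin3; first ring.
  - exact: (Df y Ay _).1.
  - exact: (Dg y Ay _).1.
  - exact: (Dk y Ay _).1.
rewrite (near_eq_derive _ Hnear) D_lin3 //.
- exact: derivableM (ds _) ((Df x Ax _).2 i).
- exact: derivableM (ds _) ((Dg x Ax _).2 i).
- exact: derivableM (ds _) ((Dk x Ax _).2 i).
Unshelve. all: by end_near.
Qed.
Definition psi (i0 : 'I_n) (lam : R) (y : V) : R := expR (lam * y 0 i0).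

Lemma psi_is_derive i0 lam (y v : V) :
  is_derive y v (psi i0 lam) (lam * v 0 i0 * psi i0 lam y).
Proof.
pose c1 := lam * v 0 i0; pose c0 := lam * y 0 i0.
have hg : is_derive (0:R) 1 (c1 \*: id + cst c0) (c1 *: 1 + 0).
  by apply: is_deriveD.
have hf : is_derive ((c1 \*: id + cst c0) 0) 1 expR (expR ((c1 \*: id + cst c0) 0)).
  exact: is_derive_expR.
have h1 := is_derive1_comp hf hg.
have E : expR \o (c1 \*: id + cst c0) = (fun t : R => psi i0 lam (t *: v + y)).
  apply: funext => t; rewrite /psi /= !mxE /c1 /c0; congr expR.
  rewrite -[LHS]/((lam * v 0 i0) * t + lam * y 0 i0); ring.
rewrite E in h1.
have ey : 0 *: v + y = y by rewrite scale0r add0r.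
have dd : derivable (psi i0 lam) y v.
  by have := dir_derivable _ _ (psi i0 lam) y v 0; rewrite ey => <-; have h1' := h1; by case: h1'.
apply: DeriveDef => //.
have := dir_D _ _ (psi i0 lam) y v 0; rewrite ey => <-.
rewrite derive_val.
have -> : (c1 \*: id + cst c0) 0 = c0 by rewrite -[LHS]/(c1 * 0 + c0) mulr0 add0r.
rewrite /psi /c0 /c1 -[_%:A]/(_ * 1) mulr1 addr0 mulrC.
done.
Qed.

Lemma partial_psi i0 lam i :
  partial i (psi i0 lam) = fun y => (lam * @ebasis R n i 0 i0) * psi i0 lam y.
Proof.
by apply: funext => y; rewrite /partial (@derive_val _ _ _ _ _ _ _ (psi_is_derive i0 lam y _)).
Qed.

Lemma D2_psi (A : set V) i0 lam : D2 A (psi i0 lam).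
Proof.
move=> y _ v; split.
  by have [] := psi_is_derive i0 lam y v.
move=> i; rewrite partial_psi.
have [d _] := psi_is_derive i0 lam y v.
exact: (derivableZ (k := lam * @ebasis R n i 0 i0) d).
Qed.

Lemma eb_coord (i i0 : 'I_n) : @ebasis R n i 0 i0 = (i0 == i)%:R.
Proof. by rewrite /ebasis mxE eqxx. Qed.

Lemma sl_psi (sig : V -> R) x i0 lam : (forall v, derivable sig x v) ->
  sigma_lap sig (psi i0 lam) x = lam * psi i0 lam x * (partial i0 sig x + lam * sig x).
Proof.
move=> ds; rewrite divg_sig.
have term : forall i, partial i (fun y => sig y * partial i (psi i0 lam) y) x
   = (lam * (i0 == i)%:R) * (partial i sig x * psi i0 lam x
       + sig x * ((lam * (i0 == i)%:R) * psi i0 lam x)).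
  move=> i; rewrite partial_psi eb_coord.
  set c := lam * (i0 == i)%:R.
  have -> : (fun y => sig y * (c * psi i0 lam y)) = c \*: (sig * psi i0 lam).
    by apply: funext => y; rewrite /= mulrCA.
  have [d _] := psi_is_derive i0 lam x (@ebasis R n i).
  rewrite /partial deriveZ; last exact: derivableM.
  rewrite deriveM // (@derive_val _ _ _ _ _ _ _ (psi_is_derive i0 lam x _)) eb_coord.
  rewrite -/c -[_ *: _]/(_ * _) -[sig x *: _]/(_ * _) -[psi i0 lam x *: _]/(_ * _).
  ring.
rewrite (bigD1 i0) //= term big1 ?addr0; last first.
  by move=> i /negPf ine; rewrite term eq_sym ine mulr0 mul0r.
rewrite eqxx mulr1; ring.
Qed.

Lemma key_ineq (p sg m1 c : R) : 0 < c -> m1 <= p -> c <= sg ->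
  0 < p + (`|m1| / c + 1) * sg.
Proof.
move=> c0 mp cs.
have e1 : (`|m1| / c + 1) * c = `|m1| + c by field; rewrite gt_eqF.
have l0 : 0 <= `|m1| / c + 1 by rewrite addr_ge0 // divr_ge0 // ltW.
have h2 : (`|m1| / c + 1) * c <= (`|m1| / c + 1) * sg by rewrite ler_wpM2l.
have h3 : - m1 <= `|m1| by rewrite -normrN ler_norm.
lra.
Qed.

Lemma psi_cont i0 lam : continuous (psi i0 lam).
Proof.
move=> y; apply: continuous_comp; last exact: continuous_expR.
apply: continuousM; [exact: cst_continuous | exact: coord_continuous].
Qed.

Lemma D2_lin3 (A : set V) (f g k : V -> R) (a b c : R) :
  open A -> D2 A f -> D2 A g -> D2 A k ->
  D2 A (fun y => a * f y + b * g y + c * k y).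
Proof.
move=> oA Df Dg Dk y Ay v; split.
  by apply: derivable_lin3; [exact: (Df y Ay v).1 | exact: (Dg y Ay v).1 | exact: (Dk y Ay v).1].
move=> i.
have nA : nbhs y A by apply: open_nbhs_nbhs.
have Hnear : {near y, (fun z => a * partial i f z + b * partial i g z + c * partial i k z)
   =1 partial i (fun z => a * f z + b * g z + c * k z)}.
  near=> z.
  have Az : A z by near: z.
  rewrite /partial D_lin3 //.
  - exact: (Df z Az _).1.
  - exact: (Dg z Az _).1.
  - exact: (Dk z Az _).1.
apply: near_eq_derivable Hnear _.
by apply: derivable_lin3; [exact: ((Df y Ay v).2 i) | exact: ((Dg y Ay v).2 i) | exact: ((Dk y Ay v).2 i)].
Unshelve. all: by end_near.
Qed.

Lemma MP (Omega : set V) (sig v0 w : V -> R) (i0 : 'I_n) (s : R) :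
  open Omega -> bounded_set Omega ->
  (forall y, Omega y -> forall v, derivable sig y v) ->
  (forall y, closure Omega y -> 0 < sig y) ->
  {within closure Omega, continuous sig} ->
  cont_ext Omega (partial i0 sig) ->
  D2 Omega v0 -> D2 Omega w ->
  {within closure Omega, continuous v0} -> {within closure Omega, continuous w} ->
  (forall y, bdry Omega y -> v0 y = 0) -> (forall y, bdry Omega y -> w y = 0) ->
  (forall y, Omega y -> sigma_lap sig v0 y + sigma_lap sig w y = 0) ->
  forall x, Omega x -> s * (v0 x + w x) <= 0.
Proof.
move=> oO bO ds sp cs [G [cG GE]] Dv Dw cv cw bv bw sl x Ox.
rewrite leNgt; apply/negP => a0.
set a := s * (v0 x + w x) in a0.
have cO : compact (closure Omega).
  by apply: bounded_closed_compact; [exact: closure_bounded | exact: closed_closure].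
have neO : closure Omega !=set0 by exists x; exact: subset_closure.
have [ym /set_mem ymO minsig] := EVT_min_rV neO cO cs.
have [yg /set_mem ygO minG] := EVT_min_rV neO cO cG.
have c0 : 0 < sig ym := sp _ ymO.
pose lam := `|G yg| / sig ym + 1.
have key : forall y, Omega y -> 0 < partial i0 sig y + lam * sig y.
  move=> y Oy; have Cy : closure Omega y := subset_closure Oy.
  apply: key_ineq c0 _ _.
    by rewrite -GE //; apply: minG; exact: mem_set.
  by apply: minsig; exact: mem_set.
have lam0 : 0 < lam by rewrite /lam ltr_wpDl // divr_ge0 // ltW.
have cpsi := psi_cont i0 lam.
have [yk /set_mem ykO maxpsi] := EVT_max_rV neO cO (continuous_subspaceT cpsi).
set K := psi i0 lam yk.
have K0 : 0 < K by rewrite /K /psi expR_gt0.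
pose eps := a / (K + K).
have eps0 : 0 < eps by rewrite divr_gt0 // addr_gt0.
have epsK : eps * K = a / 2 by rewrite /eps; field; apply: lt0r_neq0; rewrite addr_gt0.
pose z := fun y => s * v0 y + s * w y + eps * psi i0 lam y.
have cz : {within closure Omega, continuous z}.
  have -> : z = (s \*: v0 + s \*: w) + eps \*: psi i0 lam by [].
  apply: within_continuousD; first apply: within_continuousD.
  - by move=> y; apply: continuousZl_tmp; exact: cv.
  - by move=> y; apply: continuousZl_tmp; exact: cw.
  - by apply: continuous_subspaceT => y; apply: continuousZl_tmp; exact: cpsi.
have [xh /set_mem xhC maxz] := EVT_max_rV neO cO cz.
have xhO : Omega xh.
  apply: contrapT => nO.
  have bx : bdry Omega xh.
    by split => //; rewrite (interior_id Omega).1.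
  have h1 : z x <= z xh by apply: maxz; apply: mem_set; exact: subset_closure.
  have h2 : psi i0 lam xh <= K by apply: maxpsi; exact: mem_set.
  have h3 : 0 < psi i0 lam x by rewrite /psi expR_gt0.
  move: h1; rewrite /z (bv _ bx) (bw _ bx) !mulr0 !add0r -mulrDr -/a.
  have : eps * psi i0 lam xh <= eps * K by rewrite ler_wpM2l // ltW.
  have : 0 < eps * psi i0 lam x by rewrite mulr_gt0.
  rewrite epsK; lra.
have Dz : D2 Omega z := D2_lin3 Omega v0 w (psi i0 lam) s s eps oO Dv Dw (D2_psi Omega i0 lam).
have mz : forall y, Omega y -> z y <= z xh.
  by move=> y Oy; apply: maxz; apply: mem_set; exact: subset_closure.
have spO : forall y, Omega y -> 0 < sig y by move=> y Oy; apply: sp; exact: subset_closure.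
have le0 : sigma_lap sig z xh <= 0.
  rewrite divg_sig; apply: sumr_le0 => i _.
  apply: (max_D2 _ _ Omega z sig xh (@ebasis R n i) oO xhO mz) => //.
    by move=> y Oy; exact: (Dz y Oy _).1.
  by apply: derivableM; [exact: ds | exact: (Dz xh xhO _).2].
move: le0; rewrite /z (sl_lin Omega sig v0 w (psi i0 lam) s s eps xh oO xhO (ds _ xhO) Dv Dw (D2_psi Omega i0 lam)).
rewrite -mulrDr sl // mulr0 add0r sl_psi; last exact: ds _ xhO.
have := key _ xhO; have : 0 < psi i0 lam xh by rewrite /psi expR_gt0.
move=> p1 p2; rewrite leNgt => /negP; apply.
apply: mulr_gt0 eps0 _; apply: mulr_gt0 p2; exact: mulr_gt0 lam0 p1.
Qed.
End S2.

Section S3.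
Variables (R : realType) (n : nat).
Local Notation V := 'rV[R]_n.

Lemma C2_D2 (A : set V) f : C2_on A f -> D2 R n A f.
Proof.
move=> [C1 C1p] y Ay v; split; first exact/diff_derivable/(C1 y Ay).1.
by move=> i; exact/diff_derivable/(C1p i y Ay).1.
Qed.

Lemma D_prod (f g : V -> R) x v : derivable f x v -> derivable g x v ->
  'D_v (fun y => f y * g y) x = 'D_v f x * g x + f x * 'D_v g x.
Proof.
move=> df dg; have -> : (fun y => f y * g y) = f * g by [].
rewrite deriveM // -[f x *: _]/(_ * _) -[g x *: _]/(_ * _); ring.
Qed.

Lemma derivable_prod (f g : V -> R) x v : derivable f x v -> derivable g x v ->
  derivable (fun y => f y * g y) x v.
Proof. by move=> df dg; have -> : (fun y => f y * g y) = f * g by []; exact: derivableM. Qed.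

Lemma derivable_quot (f g : V -> R) x v : g x != 0 -> derivable f x v -> derivable g x v ->
  derivable (fun y => f y / g y) x v.
Proof. by move=> g0 df dg; apply: derivable_prod => //; exact: derivableV. Qed.

Lemma D_quot (f g : V -> R) x v : g x != 0 -> derivable f x v -> derivable g x v ->
  'D_v (fun y => f y / g y) x = 'D_v f x / g x - f x * 'D_v g x / (g x ^+ 2).
Proof.
move=> g0 df dg; rewrite D_prod //; last exact: derivableV.
rewrite deriveV // -[_ *: _]/(_ * _); field.
by rewrite g0.
Qed.

Lemma derivable_sum_seq (s : seq 'I_n) (F : 'I_n -> V -> R) x v :
  (forall j, derivable (F j) x v) ->
  derivable (fun y => \sum_(j <- s) F j y) x v.
Proof.
move=> dF; elim: s => [|a s IH].
  have -> : (fun y => \sum_(j <- [::]) F j y) = cst 0 by apply: funext => y; rewrite big_nil.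
  exact: derivable_cst.
have -> : (fun y => \sum_(j <- a :: s) F j y) = F a + (fun y => \sum_(j <- s) F j y).
  by apply: funext => y; rewrite big_cons.
exact: derivableD.
Qed.

Lemma derivable_sum (F : 'I_n -> V -> R) x v : (forall j, derivable (F j) x v) ->
  derivable (fun y => \sum_j F j y) x v.
Proof. exact: derivable_sum_seq. Qed.

Lemma D_lin2 (u1 u2 : V -> R) (a b : R) y v :
  derivable u1 y v -> derivable u2 y v ->
  'D_v (fun z => a * u1 z + b * u2 z) y = a * 'D_v u1 y + b * 'D_v u2 y.
Proof.
move=> d1 d2.
have -> : (fun z => a * u1 z + b * u2 z) = a \*: u1 + b \*: u2 by apply: funext.
rewrite (deriveD (derivableZ d1) (derivableZ d2)).
by rewrite (deriveZ _ d1) (deriveZ _ d2).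
Qed.

Lemma dotv_pos (u : V) : u != 0 -> 0 < dotv u u.
Proof.
move=> u0.
have /existsP [i0 ui0] : [exists i, u 0 i != 0].
  apply: contraT; rewrite negb_exists => /forallP H.
  case/negP: u0; apply/eqP/rowP => i; rewrite mxE.
  have -> : (0 : 'I_1) = ord0 by apply/val_inj.
  by apply/eqP; have := H i; rewrite negbK.
rewrite /dotv (bigD1 i0) //=; apply: ltr_pwDl.
  by rewrite lt_def mulf_neq0 //= -expr2 sqr_ge0.
by apply: sumr_ge0 => i _; rewrite -expr2 sqr_ge0.
Qed.

Lemma ident (sig h u : V -> R) x :
  (forall v, derivable sig x v) -> (forall v, derivable h x v) -> sig x != 0 ->
  (forall i v, derivable (partial i u) x v) ->
  sigma_lap sig u x = 0 ->
  sigma_lap h u x = sig x * T0 u (fun y => h y / sig y) x.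
Proof.
move=> ds dh s0 du; rewrite !divg_sig => sl.
set A := \sum_i partial i h x * partial i u x.
set B := \sum_i partial i (partial i u) x.
set C := \sum_i partial i sig x * partial i u x.
have E1 : \sum_i partial i (fun y => h y * partial i u y) x = A + h x * B.
  rewrite /A /B mulr_sumr -big_split; apply: eq_bigr => i _.
  by rewrite /partial D_prod //; exact: du.
have E2 : C + sig x * B = 0.
  rewrite -sl /C /B mulr_sumr -big_split; apply: eq_bigr => i _.
  by rewrite /partial D_prod //; exact: du.
have E3 : T0 u (fun y => h y / sig y) x = A / sig x - h x / sig x ^+ 2 * C.
  rewrite /T0 /dotv /A /C mulr_suml mulr_sumr -sumrB; apply: eq_bigr => i _.
  rewrite !mxE /partial D_quot //; ring.
rewrite E1 E3.
have -> : C = - (sig x * B) by apply/eqP; rewrite -addr_eq0 E2.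
field; exact: s0.
Qed.
End S3.


Lemma dF_alg (R : realType) (p s hy D dd : R) : 0 < s -> 0 < D ->
  (hy * (Num.sqrt D `^ p) + p * (Num.sqrt D `^ (p - 2)) * s * dd) / (s * (Num.sqrt D `^ p))
  = hy / s + p * dd / D.
Proof.
move=> s0 D0.
have e0 : 0 < Num.sqrt D by rewrite sqrtr_gt0.
rewrite powRB; last by rewrite (lt0r_neq0 e0) implybT.
rewrite powR_mulrn ?sqr_sqrtr ?ltW //.
have ep : 0 < Num.sqrt D `^ p by apply: powR_gt0.
field.
by rewrite (lt0r_neq0 D0) (lt0r_neq0 s0) (lt0r_neq0 ep).
Qed.

Lemma dotv_grad (R : realType) n (f g : 'rV[R]_n -> R) y :
  dotv (grad f y) (grad g y) = \sum_j partial j f y * partial j g y.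
Proof. by apply: eq_bigr => j _; rewrite !mxE. Qed.

Theorem proposition2p1 (R : realType) (n : nat) (Omega : set 'rV[R]_n)
  (sigma0 f u0 h : 'rV[R]_n -> R) (alpha p : R) :
  open Omega -> bounded_set Omega -> simply_connected Omega ->
  smooth_boundary Omega ->
  C2_closure Omega sigma0 -> (forall x, closure Omega x -> 0 < sigma0 x) ->
  0 < alpha < 1 -> C2alpha_bdry Omega alpha f ->
  (* u0: classical solution of div(sigma0 grad u0) = 0, u0 = f on the boundary,
     C^1 up to the boundary with non-vanishing gradient on closure Omega *)
  C2_on Omega u0 -> {within closure Omega, continuous u0} ->
  (forall x, Omega x -> sigma_lap sigma0 u0 x = 0) ->
  (forall x, bdry Omega x -> u0 x = f x) ->
  (exists G : 'rV[R]_n -> 'rV[R]_n,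
      [/\ {within closure Omega, continuous G},
          (forall x, Omega x -> G x = grad u0 x) &
          (forall x, closure Omega x -> G x != 0)]) ->
  0 < p ->
  C2_closure Omega h ->
  forall v0 w : 'rV[R]_n -> R,
  (* v0 solves div(sigma0 grad v0) = - div(h grad u0), v0 = 0 on the boundary *)
  C2_on Omega v0 -> {within closure Omega, continuous v0} ->
  (forall x, Omega x -> sigma_lap sigma0 v0 x = - sigma_lap h u0 x) ->
  (forall x, bdry Omega x -> v0 x = 0) ->
  (* w = Delta_{sigma0,D}^{-1} (sigma0 T0 rho), rho = h / sigma0 *)
  C2_on Omega w -> {within closure Omega, continuous w} ->
  (forall x, Omega x ->
     sigma_lap sigma0 w x = sigma0 x * T0 u0 (fun y => h y / sigma0 y) x) ->
  (forall x, bdry Omega x -> w x = 0) ->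
  forall x, Omega x ->
    sigma0 x * T0 u0 (fun y => dF p sigma0 u0 h v0 y
                               / (sigma0 y * (enorm (grad u0 y) `^ p))) x
    = - Lop p sigma0 u0 w x.

Proof.
move=> oO bO _ _ [sC2 scont sext _] spos _ _ uC2 ucont ulap _ [G [cG GE GnZ]] p0 hC2.
move=> v0 w vC2 vcont vlap vbdry wC2 wcont wlap wbdry x Ox.
have Cl : forall y, Omega y -> closure Omega y by move=> y; exact: subset_closure.
have ds : forall y, Omega y -> forall v, derivable sigma0 y v.
  by move=> y Oy v; exact/diff_derivable/(sC2.1 y Oy).1.
have dh : forall y, Omega y -> forall v, derivable h y v.
  by move=> y Oy v; case: hC2 => hC2 _ _ _; exact/diff_derivable/(hC2.1 y Oy).1.
have Du := C2_D2 _ _ _ _ uC2; have Dv := C2_D2 _ _ _ _ vC2; have Dw := C2_D2 _ _ _ _ wC2.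
have s0 : forall y, Omega y -> sigma0 y != 0 by move=> y Oy; exact/lt0r_neq0/spos/Cl.
have gu0 : forall y, Omega y -> grad u0 y != 0.
  by move=> y Oy; rewrite -GE //; apply: GnZ; exact: Cl.
have /existsP [i0 _] : [exists i, grad u0 x 0 i != 0].
  apply: contraT; rewrite negb_exists => /forallP H.
  case/negP: (gu0 x Ox); apply/eqP/rowP => i; rewrite [RHS]mxE.
  have -> : (0 : 'I_1) = ord0 by apply/val_inj.
  by apply/eqP; have := H i; rewrite negbK.
have sl_eq : forall y, Omega y -> sigma_lap sigma0 v0 y + sigma_lap sigma0 w y = 0.
  move=> y Oy; rewrite vlap // wlap // -(ident _ _ _ _ _ _ (ds y Oy) (dh y Oy) (s0 y Oy)) ?addNr //.
    by move=> i v; exact: ((Du y Oy v).2 i).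
  exact: ulap.
have vw : forall y, Omega y -> v0 y = - w y.
  move=> y Oy.
  have H1 := MP _ _ _ _ _ _ i0 1 oO bO ds spos scont (sext i0) Dv Dw vcont wcont vbdry wbdry sl_eq _ Oy.
  have H2 := MP _ _ _ _ _ _ i0 (-1) oO bO ds spos scont (sext i0) Dv Dw vcont wcont vbdry wbdry sl_eq _ Oy.
  lra.
have nb : forall y, Omega y -> nbhs y Omega by move=> y Oy; apply: open_nbhs_nbhs.
have pvw : forall y, Omega y -> forall i, partial i v0 y = - partial i w y.
  move=> y Oy i; rewrite /partial.
  have Hn : \forall z \near y, v0 z = (- w) z.
    by apply: filterS (nb y Oy) => z Oz; exact: vw.
  rewrite (near_eq_derive _ Hn) deriveN //; exact: (Dw y Oy _).1.
have gvw : forall y, Omega y ->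
    dotv (grad u0 y) (grad v0 y) = - dotv (grad u0 y) (grad w y).
  move=> y Oy; rewrite !dotv_grad -sumrN; apply: eq_bigr => j _.
  by rewrite pvw // mulrN.
pose Nw := fun y => \sum_j partial j u0 y * partial j w y.
pose Dd := fun y => \sum_j partial j u0 y * partial j u0 y.
pose Gw := fun y => Nw y / Dd y.
have Dpos : forall y, Omega y -> 0 < Dd y.
  by move=> y Oy; rewrite /Dd -dotv_grad; apply: dotv_pos; exact: gu0.
have Fnear : \forall y \near x,
    dF p sigma0 u0 h v0 y / (sigma0 y * enorm (grad u0 y) `^ p)
    = 1 * (h y / sigma0 y) + (-p) * Gw y.
  apply: filterS (nb x Ox) => y Oy.
  rewrite /dF /enorm gvw // dF_alg; last 2 first.
  - exact/spos/Cl.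
  - by apply: dotv_pos; exact: gu0.
  rewrite /Gw /Nw /Dd !dotv_grad; ring.
have dGw : forall i, derivable Gw x (ebasis R i).
  move=> i; apply: derivable_quot; first exact: lt0r_neq0 (Dpos x Ox).
  - apply: derivable_sum => j; apply: derivable_prod.
      exact: ((Du x Ox _).2 j).
    exact: ((Dw x Ox _).2 j).
  - apply: derivable_sum => j; apply: derivable_prod; exact: ((Du x Ox _).2 j).
have drho : forall i, derivable (fun y => h y / sigma0 y) x (ebasis R i).
  by move=> i; apply: derivable_quot; [exact: s0 | exact: dh | exact: ds].
have LHS : T0 u0 (fun y => dF p sigma0 u0 h v0 y
                               / (sigma0 y * (enorm (grad u0 y) `^ p))) x
    = \sum_i partial i u0 x * (partial i (fun y => h y / sigma0 y) x - p * partial i Gw x).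
  rewrite /T0 dotv_grad; apply: eq_bigr => i _; congr (_ * _).
  rewrite /partial (near_eq_derive _ Fnear) D_lin2 //; first ring.
  all: first [exact: (drho i) | exact: (dGw i) | idtac].
have sl0 := ulap x Ox; rewrite divg_sig in sl0.
have divE : divg (fun y => (sigma0 y * dotv (grad u0 y) (grad w y)
                         / dotv (grad u0 y) (grad u0 y)) *: grad u0 y) x
    = sigma0 x * \sum_i partial i u0 x * partial i Gw x.
  rewrite /divg.
  transitivity (\sum_i partial i (fun y => Gw y * (sigma0 y * partial i u0 y)) x).
    apply: eq_bigr => i _; congr (partial i _ x); apply: funext => y.
    rewrite !dotv_grad !mxE /Gw /Nw /Dd; ring.
  rewrite (eq_bigr (fun i => partial i Gw x * (sigma0 x * partial i u0 x)
     + Gw x * partial i (fun y => sigma0 y * partial i u0 y) x)); last first.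
    move=> i _.
    have Hd : derivable (fun y => sigma0 y * partial i u0 y) x (ebasis R i).
      by apply: derivable_prod; [exact: ds | exact: ((Du x Ox _).2 i)].
    exact: (D_prod _ _ _ _ _ _ (dGw i) Hd).
  rewrite big_split /= -mulr_sumr sl0 mulr0 addr0 mulr_sumr.
  by apply: eq_bigr => i _; ring.
rewrite LHS /Lop opprD opprK wlap // divE /T0 dotv_grad.
have -> : \sum_i partial i u0 x * (partial i (fun y => h y / sigma0 y) x - p * partial i Gw x)
   = \sum_i partial i u0 x * partial i (fun y => h y / sigma0 y) x
     - p * \sum_i partial i u0 x * partial i Gw x.
  by rewrite mulr_sumr -sumrB; apply: eq_bigr => i _; ring.
ring.
Qed.
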